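(* Let $G$ be a non-trivial finite abelian group, $H$ a subgroup of $G$, and let $f$ be an automorphism of $\mathcal{P}_{0}(G)$ with trivial pullback. Then: (1) $f(H)=H$, and $f$ restricts to an automorphism of $\mathcal{P}_{0}(H)$ with trivial pullback. (2) There is an isomorphism of monoids $\mathcal{P}_{0,H}(G)\simeq \mathcal{P}_{0}(G/H)$. Moreover, $f$ restricts to an automorphism of $\mathcal{P}_{0,H}(G)$. (3) For every nonzero $a\in G$, we have $f(G\setminus\{a\})=G\setminus\{b\}$ for some $b\in G$. Moreover, if $\operatorname{ord}(a)\geq 3$, then $f(G\setminus\{a\})=G\setminus\{a\}$.
   Context: For an additively written finite abelian group $G$, $\mathcal{P}_{0}(G)$ is the monoid of all subsets of $G$ containing $0$, with setwise addition $X+Y=\{x+y:x\in X,y\in Y\}$ and identity $\{0\}$. Every automorphism $f$ of $\mathcal{P}_0(G)$ maps $2$-element sets to $2$-element sets; the pullback of $f$ is the map $g:G\to G$ with $g(0)=0$ and $f(\{0,a\})=\{0,g(a)\}$ for nonzero $a$; $f$ has trivial pullback if $g$ is the identity, i.e. $f(\{0,a\})=\{0,a\}$ for all $a\in G$. For a subgroup $H$ of $G$, $\mathcal{P}_{0,H}(G)=H+\mathcal{P}_0(G)=\{H+X : X\in\mathcal{P}_0(G)\}$, the set of elements of $\mathcal{P}_0(G)$ divisible by $H$; it is a monoid under setwise addition with identity $H$. *)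

(* Defs.v *)
From mathcomp Require Import all_boot all_fingroup.
Set Implicit Arguments. Unset Strict Implicit. Unset Printing Implicit Defensive.
Import GroupScope.

(* The finite abelian group G is the whole carrier of a finGroupType gT
   (written multiplicatively: 1 plays the role of 0, * the role of +). *)

Definition is_mon_iso (A B : Type) (DA : A -> Prop) (mA : A -> A -> A) (eA : A)
  (DB : B -> Prop) (mB : B -> B -> B) (eB : B) (phi : A -> B) : Prop :=
  [/\ forall x, DA x -> DB (phi x),
      forall x y, DA x -> DA y -> phi x = phi y -> x = y,
      forall y, DB y -> exists2 x, DA x & phi x = y,
      forall x y, DA x -> DA y -> phi (mA x y) = mB (phi x) (phi y)
    & phi eA = eB].

Definition P0 (gT : finGroupType) (X : {set gT}) : Prop := 1 \in X.

Definition P0sub (gT : finGroupType) (H : {set gT}) (X : {set gT}) : Prop :=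
  (1 \in X) /\ X \subset H.

Definition P0H (gT : finGroupType) (H : {set gT}) (X : {set gT}) : Prop :=
  exists2 Y : {set gT}, 1 \in Y & X = H * Y.

Definition setmul (gT : finGroupType) (X Y : {set gT}) : {set gT} := X * Y.

Definition P0_aut (gT : finGroupType) (f : {set gT} -> {set gT}) : Prop :=
  is_mon_iso (@P0 gT) (@setmul gT) [set 1] (@P0 gT) (@setmul gT) [set 1] f.

Definition trivial_pullback (gT : finGroupType) (f : {set gT} -> {set gT}) : Prop :=
  forall a : gT, f [set 1; a] = [set 1; a].

(* Main.v *)
Require Import Defs.
From mathcomp Require Import all_boot all_fingroup.
From mathcomp Require Import cyclic.
Set Implicit Arguments. Unset Strict Implicit. Unset Printing Implicit Defensive.
Import GroupScope.



Lemma autP0 (gT : finGroupType) (f : {set gT} -> {set gT}) : P0_aut f ->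
  forall X : {set gT}, 1 \in X -> 1 \in f X.
Proof. by case=> h _ _ _ _. Qed.
Lemma autI (gT : finGroupType) (f : {set gT} -> {set gT}) : P0_aut f ->
  forall X Y : {set gT}, 1 \in X -> 1 \in Y -> f X = f Y -> X = Y.
Proof. by case=> _ h _ _ _. Qed.
Lemma autS (gT : finGroupType) (f : {set gT} -> {set gT}) : P0_aut f ->
  forall Y : {set gT}, 1 \in Y -> exists2 X : {set gT}, 1 \in X & f X = Y.
Proof. by case=> _ _ h _ _. Qed.
Lemma autM (gT : finGroupType) (f : {set gT} -> {set gT}) : P0_aut f ->
  forall X Y : {set gT}, 1 \in X -> 1 \in Y -> f (X * Y) = f X * f Y.
Proof. by case=> _ _ _ h _. Qed.
Lemma aut1 (gT : finGroupType) (f : {set gT} -> {set gT}) : P0_aut f ->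
  f [set 1] = [set 1].
Proof. by case=> _ _ _ _ h. Qed.

Fixpoint pset (gT : finGroupType) (s : seq gT) : {set gT} :=
  if s is h :: s' then [set 1; h] * pset s' else [set 1].

Lemma pset1 (gT : finGroupType) (s : seq gT) : 1 \in pset s.
Proof.
elim: s => [|h s IH] /=; first by rewrite set11.
by have := mem_mulg (set21 1 h) IH; rewrite mulg1.
Qed.

Lemma f_pset (gT : finGroupType) (f : {set gT} -> {set gT}) : P0_aut f ->
  trivial_pullback f -> forall s, f (pset s) = pset s.
Proof.
move=> hf ht; elim=> [|h s IH] /=; first exact: aut1 hf.
by rewrite (autM hf) ?set21 ?pset1 // ht IH.
Qed.

Lemma mem_pset (gT : finGroupType) (s : seq gT) x : x \in s -> x \in pset s.
Proof.
elim: s => [|h s IH] //=; rewrite inE => /orP [/eqP ->|/IH xs].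
  by have := mem_mulg (set22 1 h) (pset1 s); rewrite mulg1.
by have := mem_mulg (set21 1 h) xs; rewrite mul1g.
Qed.

Lemma pset_sub (gT : finGroupType) (H : {group gT}) (s : seq gT) :
  {subset s <= H} -> pset s \subset H.
Proof.
elim: s => [|h s IH] /= sH; first by rewrite sub1set group1.
apply: mul_subG; last by apply: IH => x xs; apply: sH; rewrite inE xs orbT.
by rewrite subUset !sub1set group1 sH // inE eqxx.
Qed.

Lemma fH (gT : finGroupType) (f : {set gT} -> {set gT}) (H : {group gT}) :
  P0_aut f -> trivial_pullback f -> f H = H.
Proof.
move=> hf ht.
have -> : (H : {set gT}) = pset (enum H).
  apply/eqP; rewrite eqEsubset pset_sub ?andbT; last by move=> x; rewrite mem_enum.
  by apply/subsetP => x xH; apply: mem_pset; rewrite mem_enum.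
exact: f_pset.
Qed.

Lemma compl_class (gT : finGroupType) (X : {set gT}) a :
  (forall c, c != 1 -> X * [set 1; c] = setT) -> a \notin X -> X = ~: [set a].
Proof.
move=> hX aX; apply/setP => y; rewrite !inE.
case: (eqVneq y a) => [->|ya] /=; first by rewrite (negbTE aX).
apply/negPn/negP => yX.
have c1 : y^-1 * a != 1.
  by apply: contra ya => /eqP e; apply/eqP; rewrite -(mulKVg y a) e mulg1.
have : a \in X * [set 1; y^-1 * a] by rewrite hX ?inE.
case/mulsgP => x1 x2 x1X; rewrite !inE => /orP [] /eqP -> Ea.
  by move: aX; rewrite Ea mulg1 x1X.
have : x1 = y by rewrite -(mulgK (y^-1 * a) x1) -Ea invMg invgK mulKVg.
by move=> e; move: yX; rewrite -e x1X.
Qed.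

Lemma mulT (gT : finGroupType) (a c : gT) : c != 1 -> ~: [set a] * [set 1; c] = setT.
Proof.
move=> c1; apply/setP => y; rewrite inE; apply/mulsgP.
case: (eqVneq y a) => [->|ya].
  exists (a * c^-1) c; rewrite ?inE ?eqxx ?orbT ?mulgKV //.
  apply: contra c1 => /eqP e.
  by rewrite -eq_invg1 -(mulKg a c^-1) e mulVg.
by exists y 1; rewrite ?inE ?eqxx ?mulg1.
Qed.

Lemma cls (gT : finGroupType) (f : {set gT} -> {set gT}) a :
  P0_aut f -> trivial_pullback f -> a != 1 -> exists b, f (~: [set a]) = ~: [set b].
Proof.
move=> hf ht a1.
have h1 : (1 : gT) \in ~: [set a] by rewrite !inE eq_sym.
have fT : f setT = setT by have := fH [group of [set: gT]] hf ht.
have ne : f (~: [set a]) != setT.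
  apply/negP => /eqP e; have := autI hf h1 (in_setT 1); rewrite e fT => /(_ erefl) /setP /(_ a).
  by rewrite !inE eqxx.
have [b bn] : exists b, b \notin f (~: [set a]).
  apply/existsP; move: ne; apply: contraR; rewrite negb_exists => /forallP h.
  by apply/eqP/setP => x; rewrite inE; have := h x; rewrite negbK.
exists b; apply: compl_class bn => c c1.
by rewrite -ht -(autM hf) ?set21 // mulT.
Qed.

Lemma shift (gT : finGroupType) (f : {set gT} -> {set gT}) x d b :
  P0_aut f -> trivial_pullback f -> x != 1 -> d ^+ 2 != 1 -> x * d != 1 ->
  f (~: [set x]) = ~: [set b] -> f (~: [set x * d]) = ~: [set b * d].
Proof.
move=> hf ht x1 d2 xd1 fx.
have d1 : d != 1 by apply: contra d2 => /eqP ->; rewrite expg1n.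
have dd : d^-1 != d.
  apply: contra d2 => /eqP e; rewrite expgS expg1 -{1}e mulVg //.
set W := ~: [set x; x * d].
have W1 : (1 : gT) \in W by rewrite !inE negb_or ![1 == _]eq_sym x1.
have E1 : W * [set 1; d^-1] = ~: [set x].
  apply/setP => y; rewrite !inE; apply/mulsgP/idP.
    case=> w e; rewrite !inE negb_or => /andP [wx wxd] /orP [] /eqP -> ->.
      by rewrite mulg1.
    by apply: contra wxd => /eqP e2; rewrite -e2 mulgKV.
  move=> yx; case: (eqVneq y (x * d)) => [->|yxd].
    exists (x * d * d) d^-1; rewrite ?inE ?mulgK ?eqxx ?orbT //.
    rewrite negb_or; apply/andP; split.
      by apply: contra d2 => /eqP e; rewrite expgS expg1 -(mulKg x (d * d)) (mulgA x) e mulVg.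
    by apply: contra d1 => /eqP e; rewrite -(mulKg (x * d) d) e mulVg.
  by exists y 1; rewrite ?inE ?eqxx ?mulg1 ?negb_or ?yx.
have E2 : W * [set 1; d] = ~: [set x * d].
  apply/setP => y; rewrite !inE; apply/mulsgP/idP.
    case=> w e; rewrite !inE negb_or => /andP [wx wxd] /orP [] /eqP -> ->.
      by rewrite mulg1.
    by apply: contra wx => /eqP e2; rewrite -(mulgK d w) e2 mulgK.
  move=> yxd; case: (eqVneq y x) => [->|yx].
    exists (x * d^-1) d; rewrite ?inE ?mulgKV ?eqxx ?orbT //.
    rewrite negb_or; apply/andP; split.
      by apply: contra d1 => /eqP e; rewrite -eq_invg1 -(mulKg x d^-1) e mulVg.
    by apply: contra dd => /eqP e; rewrite -(mulKg x d^-1) e mulKg.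
  by exists y 1; rewrite ?inE ?eqxx ?mulg1 ?negb_or ?yxd ?yx.
have [b' fb'] := cls hf ht xd1.
have F1 : f W * [set 1; d^-1] = ~: [set b] by rewrite -ht -(autM hf) ?set21 // E1.
have F2 : f W * [set 1; d] = ~: [set b'] by rewrite -ht -(autM hf) ?set21 // E2.
have bW : b \notin f W.
  apply/negP => bW.
  have : b \in f W * [set 1; d^-1] by have := mem_mulg bW (set21 1 d^-1); rewrite mulg1.
  by rewrite F1 !inE eqxx.
have bdW : b * d \notin f W.
  apply/negP => bW'.
  have : b \in f W * [set 1; d^-1] by have := mem_mulg bW' (set22 1 d^-1); rewrite mulgK.
  by rewrite F1 !inE eqxx.
have : b * d \notin f W * [set 1; d].
  apply/mulsgP => -[w e wW]; rewrite !inE => /orP [] /eqP -> E.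
    by move: bdW; rewrite E mulg1 wW.
  by move: bW; rewrite -(mulgK d b) E mulgK wW.
by rewrite fb' F2 !inE negbK => /eqP <-.
Qed.

Lemma part3 (gT : finGroupType) (f : {set gT} -> {set gT}) a :
  abelian [set: gT] -> P0_aut f -> trivial_pullback f -> a != 1 -> (2 < #[a])%N ->
  f (~: [set a]) = ~: [set a].
Proof.
move=> hab hf ht a1 oa.
have cT : forall u v : gT, commute u v.
  by move=> u v; apply: (centsP hab); rewrite inE.
have a2 : a ^+ 2 != 1 by apply: contraL oa => /order_inf; rewrite ltnNge => ->.
have [b fb] := cls hf ht a1.
case: (eqVneq b a) => [eba|ba]; first by rewrite fb eba.
exfalso.
set y := a * b^-1.
have y1 : y != 1.
  by apply: contra ba => /eqP e; rewrite -(mulgKV b a) -/y e mul1g.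
suff : f (~: [set y]) = ~: [set 1].
  by move=> e; have := autP0 hf (X := ~: [set y]); rewrite e !inE eqxx eq_sym y1 => /(_ isT).
case: (eqVneq ((a^-1 * y) ^+ 2) 1) => e2; last first.
  have := shift hf ht a1 e2 _ fb; rewrite mulKVg /y mulKg mulgV; exact.
have aa1 : a * a != 1 by rewrite -expg2 // .
have f2 := shift hf ht a1 a2 aa1 fb.
have d2 : (a^-1 * (a^-1 * y)) ^+ 2 != 1.
  apply: contra a2; rewrite expgMn; last exact: cT.
  by rewrite e2 mulg1 expgVn eq_invg1.
have := shift hf ht aa1 d2 _ f2.
by rewrite -mulgA mulKVg mulKVg -mulgA mulKVg /y mulKg mulgV; apply.
Qed.

Lemma subH (gT : finGroupType) (H : {group gT}) (X : {set gT}) :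
  1 \in X -> (X \subset H) <-> X * H = H.
Proof.
move=> X1; split => [sXH|e].
  by apply/eqP; rewrite eqEsubset mul_subG // mulg_subr.
by rewrite -e mulg_subl.
Qed.

Theorem lemma3p1 (gT : finGroupType) (H : {group gT}) (f : {set gT} -> {set gT}) :
  abelian [set: gT] -> [set: gT] != 1 ->
  P0_aut f -> trivial_pullback f ->
  (* (1) *)
  (f H = H
   /\ is_mon_iso (P0sub H) (@setmul gT) [set 1] (P0sub H) (@setmul gT) [set 1] f
   /\ (forall a, a \in H -> f [set 1; a] = [set 1; a]))
  (* (2) *)
  /\ ((exists phi : {set gT} -> {set coset_of H},
        is_mon_iso (P0H H) (@setmul gT) (H : {set gT})
                   (fun Z : {set coset_of H} => (1 \in Z) /\ Z \subset [set: gT] / H)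
                   (@setmul (coset_of H)) [set 1] phi)
      /\ is_mon_iso (P0H H) (@setmul gT) (H : {set gT})
                    (P0H H) (@setmul gT) (H : {set gT}) f)
  (* (3) *)
  /\ (forall a : gT, a != 1 ->
        (exists b : gT, f (~: [set a]) = ~: [set b])
        /\ ((2 < #[a])%N -> f (~: [set a]) = ~: [set a])).
Proof.
move=> hab _ hf ht.
have fHH := fH H hf ht.
have H1 : (1 : gT) \in H := group1 H.
have HY1 : forall Y : {set gT}, 1 \in Y -> 1 \in H * Y.
  by move=> Y Y1; have := mem_mulg H1 Y1; rewrite mulg1.
split; [split; [exact: fHH | split] | split; [split|]].
- split.
  + move=> X [X1 XH]; split; first exact: (autP0 hf X1).
    apply/(subH _ (autP0 hf X1)).
    by rewrite -{1 2}fHH -(autM hf) // (proj1 (subH H X1) XH).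
  + by move=> X Y [X1 _] [Y1 _]; exact: (autI hf X1 Y1).
  + move=> Y [Y1 YH]; have [X X1 fX] := autS hf Y1.
    exists X => //; split => //; apply/(subH H X1).
    apply: (autI hf) => //; first by have := mem_mulg X1 H1; rewrite mulg1.
    by rewrite (autM hf) // fX fHH (proj1 (subH H Y1) YH).
  + by move=> X Y [X1 _] [Y1 _]; apply: (autM hf).
  + exact: aut1 hf.
- by move=> a _; apply: ht.
- have nH : [set: gT] \subset 'N(H) := sub_abelian_norm hab (subsetT H).
  have nA : forall A : {set gT}, A \subset 'N(H).
    by move=> A; apply: subset_trans (subsetT A) nH.
  have HHY : forall Y : {set gT}, H * (H * Y) = H * Y by move=> Y; rewrite mulgA mulGid.
  exists (fun X => X / H); split.
  + move=> X [Y Y1 ->]; split; last exact: quotientS (subsetT _).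
    have : H / H \subset (H * Y) / H by apply: quotientS; apply: mulg_subl.
    by rewrite trivg_quotient sub1set.
  + move=> X X' [Y Y1 ->] [Y' Y1' ->] e.
    by rewrite -HHY -quotientK // e quotientK // HHY.
  + move=> Z [Z1 _]; exists (coset H @*^-1 Z); last exact: cosetpreK.
    exists (coset H @*^-1 Z).
      have : coset H @*^-1 1 \subset coset H @*^-1 Z by rewrite cosetpreSK sub1set.
      by rewrite cosetpre1 => /subsetP; apply.
    by rewrite -{1}[Z]mul1g cosetpreM cosetpre1.
  + by move=> X Y _ _; apply: quotientMl.
  + exact: trivg_quotient.
- split.
  + move=> X [Y Y1 ->]; exists (f Y); first exact: (autP0 hf Y1).
    by rewrite (autM hf) // fHH.
  + move=> X Y [X0 X01 ->] [Y0 Y01 ->]; exact: (autI hf (HY1 _ X01) (HY1 _ Y01)).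
  + move=> Z [W W1 ->]; have [V V1 fV] := autS hf W1.
    exists (H * V); first by exists V.
    by rewrite (autM hf) // fHH fV.
  + move=> X Y [X0 X01 ->] [Y0 Y01 ->]; exact: (autM hf (HY1 _ X01) (HY1 _ Y01)).
  + exact: fHH.
- move=> a a1; split; first exact: (cls hf ht a1).
  exact: (part3 hab hf ht a1).
Qed.
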